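(* Let $f\colon\mathbb{R}^m\to\mathbb{R}$ be as in the context, let $p\in\mathbb{R}^m$, and let $L\le m$ be a positive integer. Let $q_1,\dots,q_D$ be the pairwise distinct elements of $\{-\frac{2\pi}{3},0,\frac{2\pi}{3}\}^m$ having at most $L$ non-zero entries (all such elements, each listed once). Define $\tilde f\colon\mathbb{R}^m\to\mathbb{R}$ by $$\tilde f(\theta)=\sum_{j=1}^D f(p+q_j)\,\tilde K(q_j,\theta-p)\quad\text{for all }\theta\in\mathbb{R}^m.$$ Then: (i) $D=\sum_{k=0}^L 2^k\binom{m}{k}$, i.e. obtaining $\tilde f$ requires evaluating $f$ at $D=\sum_{k=0}^L2^k\binom mk$ points; (ii) if $\vartheta\in\mathbb{R}^m$ has at most $L$ non-zero entries, then $\tilde f(p+\vartheta)=f(p+\vartheta)$; (iii) $D^\alpha(f-\tilde f)(p)=0$ for all multi-indices $\alpha\in(\mathbb{Z}_{\ge0})^m$ with $|\alpha|\le L$.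
   Context: The function $f\colon\mathbb{R}^m\to\mathbb{R}$ is $f(\theta)=\langle\psi(\theta)|\mathcal{M}|\psi(\theta)\rangle$, where $\mathcal{M}\in\mathbb{C}^{2^n\times2^n}$ is Hermitian and $|\psi(\theta)\rangle=C_{m+1}R_m(\theta_m)C_m\cdots R_1(\theta_1)C_1|0\rangle^{\otimes n}$ with $C_1,\dots,C_{m+1}$ arbitrary $n$-qubit unitaries and $R_j(\theta_j)=\exp(-i\frac{\theta_j}{2}G_j)$, where each $G_j\in\mathbb{C}^{2^n\times2^n}$ is Hermitian with set of eigenvalues $\{-1,1\}$. It is known that such $f$ is of the form $f(z)=\sum_{\omega\in\{-1,0,1\}^m}c_\omega e^{i\omega^\intercal z}$ with $\overline{c_{-\omega}}=c_\omega$. $\tilde K(x,z)=\prod_{j=1}^m\frac{1+2\cos(x_j-z_j)}{3}$ for $x,z\in\mathbb{R}^m$. $D^\alpha$ denotes the partial derivative of multi-index $\alpha$, $|\alpha|=\sum_i\alpha_i$. *)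

(* Defs.v *)
From HB Require Import structures.
From mathcomp Require Import all_boot all_order all_algebra.
From mathcomp Require Import all_classical all_reals all_analysis.
From mathcomp Require Import complex.
Set Implicit Arguments. Unset Strict Implicit. Unset Printing Implicit Defensive.
Import Order.TTheory GRing.Theory Num.Theory.
Import numFieldNormedType.Exports.
Local Open Scope ring_scope.
Local Open Scope complex_scope.

Section Defs.
Variable R : realType.

Definition adjmx (N : nat) (A : 'M[R[i]]_N) : 'M[R[i]]_N := map_mx Num.conj A^T.
Definition hermitian_mx (N : nat) (A : 'M[R[i]]_N) : Prop := adjmx A = A.
Definition unitary_mx (N : nat) (A : 'M[R[i]]_N) : Prop := A *m adjmx A = 1%:M.

(* |0>^{(x) n} : the first computational basis vector of C^(2^n) *)
Definition ket0 (n : nat) : 'cV[R[i]]_(2 ^ n) := \col_k (k == 0 :> nat)%:R.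

(* R_j(t) = exp(-i t/2 G) for G Hermitian with eigenvalues in {-1,1}
   (so G^2 = 1), written in closed form cos(t/2) I - i sin(t/2) G. *)
Definition rotation (N : nat) (G : 'M[R[i]]_N) (t : R) : 'M[R[i]]_N :=
  ((cos (t / 2))%:C)%:M - ('i * (sin (t / 2))%:C) *: G.

(* psi(theta) = C_{m+1} R_m(theta_m) C_m ... R_1(theta_1) C_1 |0>^{(x) n}
   (0-based: C ord0 is C_1, G j is G_{j+1}, C (lift ord0 j) is C_{j+2}) *)
Definition psi (n m : nat) (C : 'I_m.+1 -> 'M[R[i]]_(2 ^ n))
  (G : 'I_m -> 'M[R[i]]_(2 ^ n)) (theta : 'rV[R]_m) : 'cV[R[i]]_(2 ^ n) :=
  foldl (fun v (j : 'I_m) => C (lift ord0 j) *m (rotation (G j) (theta 0 j) *m v))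
        (C ord0 *m ket0 n) (enum 'I_m).

(* f(theta) = <psi(theta)| M |psi(theta)>  (real since M is Hermitian) *)
Definition expval (n m : nat) (M : 'M[R[i]]_(2 ^ n)) (C : 'I_m.+1 -> 'M[R[i]]_(2 ^ n))
  (G : 'I_m -> 'M[R[i]]_(2 ^ n)) (theta : 'rV[R]_m) : R :=
  complex.Re (((map_mx Num.conj (psi C G theta))^T *m M *m psi C G theta) 0 0).

Definition Ktilde (m : nat) (x z : 'rV[R]_m) : R :=
  \prod_(j < m) ((1 + 2 * cos (x 0 j - z 0 j)) / 3).

Definition nnz (m : nat) (v : 'rV[R]_m) : nat := #|[set j : 'I_m | v 0 j != 0]|.

Definition grid_pt (m L : nat) (v : 'rV[R]_m) : Prop :=
  (forall j, v 0 j = - (2 * pi / 3) \/ v 0 j = 0 \/ v 0 j = 2 * pi / 3) /\ (nnz v <= L)%N.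

Definition partial (m : nat) (i : 'I_m) (g : 'rV[R]_m -> R) : 'rV[R]_m -> R :=
  fun x => derive g x (delta_mx 0 i).

Definition Dmulti (m : nat) (alpha : 'I_m -> nat) (g : 'rV[R]_m -> R) : 'rV[R]_m -> R :=
  foldr (fun i h => iter (alpha i) (partial i) h) g (enum 'I_m).

End Defs.

(* Main.v *)
Require Import Defs.
From HB Require Import structures.
From mathcomp Require Import all_boot all_order all_algebra.
From mathcomp Require Import all_classical all_reals all_analysis.
From mathcomp Require Import complex.
From mathcomp Require Import ring lra.
Import Order.TTheory GRing.Theory Num.Theory.
Import numFieldNormedType.Exports.
Set Implicit Arguments. Unset Strict Implicit.
Local Open Scope ring_scope.

Section Trig.
Variable R : realType.

Lemma cos3 (y : R) : cos (y *+ 3) = 4 * cos y ^+ 3 - 3 * cos y.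
Proof.
have -> : y *+ 3 = y *+ 2 + y by rewrite mulrSr.
rewrite cosD cos_mulr2n sin_mulr2n.
have := sin2cos2 y; rewrite !expr2 /= => hs.
rewrite mulrnAl -mulrA (mulrC (sin y)) mulrA -(mulrA _ (sin y)) hs.
rewrite mulr2n /=. ring.
Qed.

Lemma cos_pi3 : cos (pi / 3) = 1 / 2 :> R.
Proof.
have h3 : (pi / 3) *+ 3 = pi :> R by rewrite -mulr_natr mulrAC -mulrA divff ?mulr1 // pnatr_eq0.
have := cos3 (pi / 3); rewrite h3 cospi => E.
have cpos : 0 < cos (pi / 3 : R).
  apply: cos_gt0_pihalf; have := pi_gt0 R; move=> hp.
  apply/andP; split; lra.
set c := cos (pi / 3) in E cpos *.
have E2 : (c + 1) * (2 * c - 1) ^+ 2 = 0.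
  have -> : (c + 1) * (2 * c - 1) ^+ 2 = (4 * c ^+ 3 - 3 * c) + 1 by ring.
  by rewrite -E addNr.
move: E2 => /eqP; rewrite mulf_eq0 => /orP [/eqP H|].
  lra.
rewrite sqrf_eq0 => /eqP H; lra.
Qed.

Lemma cos_w : cos (2 * pi / 3) = - (1 / 2) :> R.
Proof.
have -> : 2 * pi / 3 = (pi / 3) *+ 2 :> R by rewrite mulr2n; lra.
rewrite cos_mulr2n cos_pi3. lra.
Qed.

Lemma sin_w2 : sin (2 * pi / 3) ^+ 2 = 3 / 4 :> R.
Proof. rewrite sin2cos2 cos_w; lra. Qed.

End Trig.

Section I1.
Variable R : realType.
Definition w : R := 2 * pi / 3.
Definition Xv (y : 'I_3) : R := if val y == 0%N then 0 else if val y == 1%N then w else - w.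
Definition kk (u : R) := (1 + 2 * cos u) / 3.
Definition deg1 (h : R -> R) := exists a b c : R, forall t, h t = a + b * cos t + c * sin t.

Lemma interp1 h : deg1 h -> forall s z, h z = \sum_(y < 3) h (s + Xv y) * kk (Xv y - (z - s)).
Proof.
move=> [a [b [c hE]]] s z.
rewrite !big_ord_recr big_ord0 /= /Xv /= !hE /kk.
have [u ->] : exists u, z = s + u by exists (z - s); rewrite addrC subrK.
have -> : s + u - s = u by ring.
rewrite sub0r.
rewrite !cosD !sinD ?cosB !cosN !sinN cos0 sin0.
have cw := cos_w R. have sw := sin_w2 R.
rewrite -/w in cw sw.
rewrite cw.
set S := sin w in sw *. clearbody S.
move: sw; rewrite expr2 => sw.

apply/eqP; rewrite -subr_eq0; apply/eqP.
set L := (X in X = 0).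
have -> : L = (3 / 4 - S * S) * (4/3 * ((c * cos s - b * sin s) * sin u)).
  rewrite /L. move: (cos s) (sin s) (cos u) (sin u) => C1 S1 C2 S2. by field.
by rewrite sw subrr mul0r.
Qed.
End I1.
Arguments deg1 {R}. Arguments Xv {R}. Arguments kk {R}. Arguments w {R}.
Arguments interp1 {R}.

Section Multi.
Variable R : realType.
Variable m : nat.
Variable p : 'rV[R]_m.

Definition upd (th : 'rV[R]_m) (j : 'I_m) (t : R) : 'rV[R]_m :=
  \row_k (if k == j then t else th 0 k).
Definition Dg (g : 'rV[R]_m -> R) := forall th j, deg1 (fun t => g (upd th j t)).
Definition upd3 (e : {ffun 'I_m -> 'I_3}) j y : {ffun 'I_m -> 'I_3} :=
  [ffun k => if k == j then y else e k].
Definition mix (th : 'rV[R]_m) (S : {set 'I_m}) (e : {ffun 'I_m -> 'I_3}) : 'rV[R]_m :=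
  \row_j (if j \in S then p 0 j + Xv (e j) else th 0 j).
Definition W (th : 'rV[R]_m) (S : {set 'I_m}) (e : {ffun 'I_m -> 'I_3}) : R :=
  \prod_(j in S) kk (Xv (e j) - (th 0 j - p 0 j)).
Definition subS (S : {set 'I_m}) (e : {ffun 'I_m -> 'I_3}) : bool :=
  [forall j, (j \notin S) ==> (e j == ord0)].

Lemma upd_id th j : upd th j (th 0 j) = th.
Proof. by apply/rowP => k; rewrite !mxE; case: eqP => // ->. Qed.

Lemma step g (Hg : Dg g) (S : {set 'I_m}) (j : 'I_m) (th : 'rV[R]_m) : j \notin S ->
  \sum_(e | subS S e) g (mix th S e) * W th S e =
  \sum_(e | subS (j |: S) e) g (mix th (j |: S) e) * W th (j |: S) e.
Proof.
move=> jS.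
have E e : g (mix th S e) =
   \sum_(y < 3) g (mix th (j |: S) (upd3 e j y)) * kk (Xv y - (th 0 j - p 0 j)).
  rewrite -{1}[mix th S e](upd_id _ j) (interp1 _ (Hg _ j) (p 0 j)).
  apply: eq_bigr => y _; congr (g _ * kk (_ - (_ - _))).
    apply/rowP => k; rewrite !mxE ffunE in_setU1.
    by case: (k =P j) => [->|] //=; rewrite addrC.
  by rewrite mxE (negbTE jS).
have EW e y : W th (j |: S) (upd3 e j y) = kk (Xv y - (th 0 j - p 0 j)) * W th S e.
  rewrite /W big_setU1 //= ffunE eqxx; congr (_ * _).
  apply: eq_bigr => k kS; rewrite ffunE; case: (k =P j) => // kj.
  by move: jS; rewrite -kj kS.
under eq_bigr => e _ do rewrite E big_distrl /=.
rewrite exchange_big /=.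
rewrite (partition_big (fun e : {ffun 'I_m -> 'I_3} => e j) xpredT) //=.
apply: eq_bigr => y _.
rewrite [RHS](reindex_onto (fun e => upd3 e j y) (fun e => upd3 e j ord0)); last first.
  move=> e /andP [_ /eqP <-]; apply/ffunP => k; rewrite !ffunE.
  by case: (k =P j) => [->|].
apply: eq_big.
  move=> e; rewrite ffunE eqxx eqxx andbT.
  apply/idP/idP.
    move=> /forallP H; apply/andP; split.
      apply/forallP => k; rewrite ffunE in_setU1 negb_or.
      by case: (k =P j) => //= _; apply: H.
    have ej : e j = ord0 by apply/eqP; move: (H j); rewrite jS.
    apply/eqP/ffunP => k; rewrite !ffunE; case: (k =P j) => [->|]; by rewrite ?ej ?eqxx.
  move=> /andP [/forallP H /eqP He]; apply/forallP => k; apply/implyP => kS.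
  rewrite -He !ffunE; case: (k =P j) => //= kj.
  by move: (H k); rewrite ffunE (introF eqP kj) in_setU1 (introF eqP kj) /= (negbTE kS).
move=> e _; rewrite EW; ring.
Qed.

Lemma base g (th : 'rV[R]_m) : \sum_(e | subS finset.set0 e) g (mix th finset.set0 e) * W th finset.set0 e = g th.
Proof.
rewrite (big_pred1 [ffun => ord0]); last first.
  move=> e /=; apply/forallP/eqP => [H|->].
    apply/ffunP => k; rewrite ffunE; apply/eqP; move: (H k); by rewrite inE.
  by move=> k; rewrite ffunE eqxx implybT.
rewrite /W big_set0 mulr1; congr (g _); apply/rowP => k; by rewrite !mxE inE.
Qed.

Lemma interp_set g (Hg : Dg g) (s : seq 'I_m) th :
  g th = \sum_(e | subS [set x in s] e) g (mix th [set x in s] e) * W th [set x in s] e.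
Proof.
elim: s => [|j s IH].
  have -> : [set x in [::]] = finset.set0 :> {set 'I_m} by apply/setP => x; rewrite !inE.
  by rewrite base.
have [js|js] := boolP (j \in s).
  have -> : [set x in j :: s] = [set x in s] by apply/setP => x; rewrite !inE; case: (x =P j) => // ->.
  exact: IH.
have -> : [set x in j :: s] = j |: [set x in s] by apply/setP => x; rewrite !inE.
by rewrite -step // ?inE.
Qed.

End Multi.

Local Open Scope complex_scope.

Section Bil.
Variable R : realType.
Variable N : nat.
Variable M : 'M[R[i]]_N.
Definition bil (x y : 'cV[R[i]]_N) : R[i] := ((map_mx Num.conj x)^T *m M *m y) 0 0.
Lemma bilE x y : bil x y = \sum_k \sum_i (Num.conj (x i 0) * M i k * y k 0).
Proof. rewrite /bil mxE; apply: eq_bigr => k _; rewrite mxE big_distrl /=; apply: eq_bigr => i _; by rewrite !mxE. Qed.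
Lemma bil_exp (a b : R[i]) x y : bil (a *: x + b *: y) (a *: x + b *: y) =
  a^* * a * bil x x + a^* * b * bil x y + b^* * a * bil y x + b^* * b * bil y y.
Proof.
rewrite !bilE !mulr_sumr -!big_split /=; apply: eq_bigr => k _.
rewrite !mulr_sumr -!big_split /=; apply: eq_bigr => i _.
rewrite !mxE. rewrite (rmorphD Num.conj) !(rmorphM Num.conj). 
change (Num.conj a) with (a^*). change (Num.conj b) with (b^*).
ring.
Qed.
End Bil.

Lemma ReRM (R : realType) (x : R) (z : R[i]) : complex.Re (x%:C * z) = x * complex.Re z.
Proof. by case: z => a b /=; rewrite mul0r subr0. Qed.

Lemma conjR (R : realType) (x : R) : Num.conj (x%:C : R[i]) = x%:C.
Proof. exact: conjc_real. Qed.

Lemma alg_half (R : realType) (C1 S1 A B X Y : R) : S1 * S1 = 1 - C1 * C1 ->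
  C1 * C1 * A + C1 * S1 * X + S1 * C1 * Y + S1 * S1 * B =
  (A + B) / 2 + (A - B) / 2 * (C1 ^+ 2 *+ 2 - 1) + (X + Y) / 2 * ((C1 * S1) *+ 2).
Proof. move=> h; rewrite h. by field. Qed.

Section GenFold.
Variables (K : pzRingType) (N : nat) (I : eqType).
Implicit Types (Nf : I -> 'M[K]_N).

Lemma gf1 Nf s (A : 'M[K]_N) :
  foldl (fun B k => Nf k *m B) A s = foldl (fun B k => Nf k *m B) 1%:M s *m A.
Proof.
elim: s A => [|k s IH] A /=; first by rewrite mul1mx.
by rewrite IH [in RHS]IH mulmx1 mulmxA.
Qed.

Lemma gf_eq Nf Nf0 s (A : 'M[K]_N) : (forall k, k \in s -> Nf k = Nf0 k) ->
  foldl (fun B k => Nf k *m B) A s = foldl (fun B k => Nf0 k *m B) A s.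
Proof.
elim: s A => [|k s IH] A H //=.
have Hk : Nf k = Nf0 k by apply: H; rewrite inE eqxx.
rewrite Hk; apply: IH => k' ks; apply: H; by rewrite inE ks orbT.
Qed.

Lemma gL1 (Cf Rf : I -> 'M[K]_N) s (A : 'M[K]_N) (v : 'cV[K]_N) :
  foldl (fun v k => Cf k *m (Rf k *m v)) (A *m v) s
  = foldl (fun B k => (Cf k *m Rf k) *m B) A s *m v.
Proof. elim: s A => [|k s IH] A //=; rewrite -IH; by rewrite !mulmxA. Qed.

Lemma gen_psi (Cf Rf Rf0 : I -> 'M[K]_N) (Rt : 'M[K]_N) s1 j s2 (A : 'M[K]_N) (v : 'cV[K]_N) :
  j \notin s1 -> j \notin s2 -> (forall k, k != j -> Rf k = Rf0 k) -> Rf j = Rt ->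
  foldl (fun v k => Cf k *m (Rf k *m v)) (A *m v) (s1 ++ j :: s2) =
  (foldl (fun B k => (Cf k *m Rf0 k) *m B) 1%:M s2 *m Cf j) *m
    (Rt *m (foldl (fun B k => (Cf k *m Rf0 k) *m B) A s1 *m v)).
Proof.
move=> js1 js2 H Hj.
have E (s : seq I) : j \notin s -> forall k, k \in s -> Cf k *m Rf k = Cf k *m Rf0 k.
  by move=> js k ks; rewrite H //; apply: contraNneq js => <-.
rewrite gL1 foldl_cat /= gf1 (gf_eq _ (E s2 js2)) (gf_eq _ (E s1 js1)) Hj.
by rewrite !mulmxA.
Qed.
End GenFold.

Section Psi.
Local Opaque cos sin.
Variable R : realType.
Variables n m : nat.
Variable C : 'I_m.+1 -> 'M[R[i]]_(2 ^ n).
Variable G : 'I_m -> 'M[R[i]]_(2 ^ n).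

Lemma psi_struct (th : 'rV[R]_m) (j : 'I_m) : exists P u, forall t,
  psi C G (upd th j t) = P *m (rotation (G j) t *m u).
Proof.
have Hj : j \in enum 'I_m by rewrite mem_enum.
have U := enum_uniq 'I_m.
rewrite /psi.
move: U; case/splitPr: Hj => s1 s2 U.
move: U; rewrite cat_uniq /= => /and3P [_ /norP [js1 _] /andP [js2 _]].
exists (foldl (fun B k => (C (lift ord0 k) *m rotation (G k) (th 0 k)) *m B) 1%:M s2 *m C (lift ord0 j)).
exists (foldl (fun B k => (C (lift ord0 k) *m rotation (G k) (th 0 k)) *m B) (C ord0) s1 *m ket0 R n).
move=> t.
have H1 : forall k, k != j -> rotation (G k) ((upd th j t) 0 k) = rotation (G k) (th 0 k).
  by move=> k kj; rewrite mxE (negbTE kj).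
have H2 : rotation (G j) ((upd th j t) 0 j) = rotation (G j) t by rewrite mxE eqxx.
exact (@gen_psi _ _ _ (fun k => C (lift ord0 k)) (fun k => rotation (G k) ((upd th j t) 0 k)) (fun k => rotation (G k) (th 0 k)) _ s1 j s2 (C ord0) (ket0 R n) js1 js2 H1 H2).
Qed.

Lemma f_deg1 (M : 'M[R[i]]_(2 ^ n)) : Dg (expval M C G).
Proof.
move=> th j.
have [P [u Hp]] := psi_struct th j.
have Hpsi t : psi C G (upd th j t) = (cos (t / 2))%:C *: (P *m u) + (sin (t / 2))%:C *: (- ('i *: (P *m (G j *m u)))).
  rewrite Hp /rotation mulmxBl mul_scalar_mx -scalemxAl mulmxBr -!scalemxAr.
  by rewrite scalerN scalerA (mulrC (sin _)%:C).
set x1 := P *m u. set x2 := - ('i *: (P *m (G j *m u))).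
pose A := complex.Re (bil M x1 x1). pose B := complex.Re (bil M x2 x2).
pose X := complex.Re (bil M x1 x2). pose Y := complex.Re (bil M x2 x1).
exists ((A + B) / 2), ((A - B) / 2), ((X + Y) / 2) => t.
have [h ->] : exists h, t = h *+ 2 by exists (t / 2); rewrite mulr2n -splitr.
rewrite /expval Hpsi.
have -> : h *+ 2 / 2 = h by rewrite mulr2n mulrDl -splitr.
have E := bil_exp M ((cos h)%:C) ((sin h)%:C) (P *m u) (- ('i *: (P *m (G j *m u)))).
transitivity (complex.Re (bil M ((cos h)%:C *: (P *m u) + (sin h)%:C *: (- ('i *: (P *m (G j *m u))))) ((cos h)%:C *: (P *m u) + (sin h)%:C *: (- ('i *: (P *m (G j *m u))))))).
  by [].
rewrite E.
rewrite !conjR -!rmorphM.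
rewrite !raddfD /= !ReRM cos_mulr2n sin_mulr2n.
apply: alg_half.
have := cos2Dsin2 h; rewrite !expr2 => H; lra.
Qed.

End Psi.

Section Der.
Variable R : realType.
Variable m : nat.
Local Notation V := ('rV[R]_m).

Definition tri (a : R * R * R) : R -> R := cst a.1.1 + a.1.2 *: (@cos R) + a.2 *: (@sin R).
Definition dtri (a : R * R * R) : R * R * R := (0, a.2, - a.1.2).

Lemma triE a u : tri a u = a.1.1 + a.1.2 * cos u + a.2 * sin u.
Proof. by []. Qed.

Lemma is_derive_tri a (u : R) : is_derive u 1 (tri a) (tri (dtri a) u).
Proof.
have H := is_deriveD (is_deriveD (@is_derive_cst _ _ _ a.1.1 u 1) (is_deriveZ a.1.2 (is_derive_cos u))) (is_deriveZ a.2 (is_derive_sin u)).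
apply: (is_derive_eq H).
rewrite triE /=.
have sc : forall x y : R, x *: y = x * y by [].
rewrite (sc _ (- sin u)) (sc _ (cos u)); ring.
Qed.


Definition Pf (T : 'I_m -> R * R * R) (th : V) : R := \prod_j tri (T j) (th 0 j).
Definition dT (i : 'I_m) (T : 'I_m -> R * R * R) : 'I_m -> R * R * R :=
  fun j => if j == i then dtri (T j) else T j.

Lemma transfer (F : V -> R) (g : R -> R) (th v : V) (a dg : R) :
  (forall h, F (h *: v + th) = g (h + a)) -> is_derive a 1 g dg -> is_derive th v F dg.
Proof.
move=> H [d1 d2].
have Fth : F th = g a by have := H 0; rewrite scale0r add0r => ->; rewrite add0r.
have E : (fun h : R => h^-1 *: ((F \o shift th) (h *: v) - F th)) =
         (fun h : R => h^-1 *: ((g \o shift a) (h *: 1) - g a)).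
  apply/funext => h /=; rewrite /shift H Fth.
  have sc : forall x y : R, x *: y = x * y by [].
  have -> : h *: (1 : R) = h by rewrite (sc h 1) mulr1.
  by [].
split; first by rewrite /derivable E.
by rewrite /derive E.
Qed.

Lemma Pf_shift T (th : V) i h :
  Pf T (h *: delta_mx 0 i + th) = (\prod_(j | j != i) tri (T j) (th 0 j)) * tri (T i) (h + th 0 i).
Proof.
rewrite /Pf (bigD1 i) //= mulrC; congr (_ * _).
  apply: eq_bigr => j ji; rewrite !mxE eqxx /= (negbTE ji) mulr0 add0r //.
by rewrite !mxE !eqxx /= mulr1.
Qed.

Lemma is_derive_Pf T (th : V) i : is_derive th (delta_mx 0 i) (Pf T) (Pf (dT i T) th).
Proof.
set c := \prod_(j | j != i) tri (T j) (th 0 j).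
apply: (@transfer _ (c *: tri (T i)) _ _ (th 0 i)).
  by move=> h; rewrite Pf_shift.
have -> : Pf (dT i T) th = c *: tri (dtri (T i)) (th 0 i).
  rewrite /Pf (bigD1 i) //= /dT eqxx mulrC; congr (_ * _).
  by apply: eq_bigr => j ji; rewrite (negbTE ji).
exact: (is_deriveZ c (is_derive_tri (T i) (th 0 i))).
Qed.

Lemma is_derive_bigsum (I : Type) (r : seq I) (P : pred I) (F : I -> V -> R) (dF : I -> R) (x v : V) :
  (forall e, P e -> is_derive x v (F e) (dF e)) ->
  is_derive x v (fun y => \sum_(e <- r | P e) F e y) (\sum_(e <- r | P e) dF e).
Proof.
move=> H; elim: r => [|e r IH].
  have -> : (fun y => \sum_(e <- [::] | P e) F e y) = cst 0 by apply/funext => y; rewrite big_nil.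
  rewrite big_nil; exact: is_derive_cst.
rewrite big_cons.
case Pe: (P e).
  have -> : (fun y => \sum_(e0 <- e :: r | P e0) F e0 y) = F e + (fun y => \sum_(e0 <- r | P e0) F e0 y).
    by apply/funext => y; rewrite big_cons Pe.
  apply: is_deriveD => //; exact: H.
have -> : (fun y => \sum_(e0 <- e :: r | P e0) F e0 y) = (fun y => \sum_(e0 <- r | P e0) F e0 y).
  by apply/funext => y; rewrite big_cons Pe.
exact: IH.
Qed.

Definition sumfun (I : finType) (P : pred I) (c : I -> R) (T : I -> 'I_m -> R * R * R) : V -> R :=
  fun th => \sum_(e | P e) c e * Pf (T e) th.

Lemma partial_sumfun (I : finType) i (P : pred I) c T :
  partial i (sumfun P c T) = sumfun P c (fun e => dT i (T e)).
Proof.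
apply/funext => th; rewrite /partial.
have H : is_derive th (delta_mx 0 i) (sumfun P c T) (sumfun P c (fun e => dT i (T e)) th).
  apply: (@is_derive_bigsum I _ P (fun e th => c e * Pf (T e) th) (fun e => c e * Pf (dT i (T e)) th)).
  move=> e _; exact: (is_deriveZ (c e) (is_derive_Pf (T e) th i)).
by case: H.
Qed.

Lemma iter_partial (I : finType) k i (P : pred I) c T :
  iter k (partial i) (sumfun P c T) = sumfun P c (fun e => iter k (dT i) (T e)).
Proof. elim: k => // k IH; by rewrite iterS IH partial_sumfun. Qed.

Definition DT (alpha : 'I_m -> nat) (s : seq 'I_m) (T : 'I_m -> R * R * R) :=
  foldr (fun i T' => iter (alpha i) (dT i) T') T s.

Lemma Dmulti_sumfun (I : finType) alpha (P : pred I) c T :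
  Dmulti alpha (sumfun P c T) = sumfun P c (fun e => DT alpha (enum 'I_m) (T e)).
Proof.
rewrite /Dmulti /DT; elim: (enum 'I_m) => //= i s IH; by rewrite IH iter_partial.
Qed.

Lemma DT_keep alpha s T j : alpha j = 0%N -> DT alpha s T j = T j.
Proof.
move=> aj; elim: s => //= i s IH; rewrite -IH.
have [eij|ij] := eqVneq i j; first by rewrite eij aj.
elim: (alpha i) => //= k IHk; by rewrite {1}/dT eq_sym (negbTE ij).
Qed.

End Der.

Section Count.
Variable m : nat.
Definition supp (e : {ffun 'I_m -> 'I_3}) : {set 'I_m} := [set j | e j != ord0].

Lemma card_supp (S : {set 'I_m}) : #|[set e : {ffun 'I_m -> 'I_3} | supp e == S]| = (2 ^ #|S|)%N.
Proof.
have -> : #|[set e : {ffun 'I_m -> 'I_3} | supp e == S]| =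
          #|pffun_on ord0 S [set y : 'I_3 | y != ord0]|.
  apply: eq_card => e; rewrite inE; apply/eqP/pfamilyP.
    move=> <-; split.

      by apply/fintype.subsetP => x; rewrite !inE.
    by move=> x; rewrite !inE.
  move=> [/fintype.subsetP H1 H2]; apply/setP => x; rewrite inE.
  apply/idP/idP => [ex|xS]; first by apply: H1; rewrite inE.
  by have := H2 x xS; rewrite inE.
rewrite card_pffun_on.
have -> : #|[set y : 'I_3 | y != ord0]| = 2%N.
  have -> : [set y : 'I_3 | y != ord0] = [set~ ord0] by apply/setP => y; rewrite !inE.
  by rewrite cardsC1 card_ord.
by [].
Qed.

Lemma count_good (L : nat) :
  #|[set e : {ffun 'I_m -> 'I_3} | (#|supp e| <= L)%N]| = (\sum_(k < L.+1) 2 ^ k * 'C(m, k))%N.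
Proof.
rewrite -sum1_card.
rewrite (partition_big supp (fun S : {set 'I_m} => (#|S| <= L)%N)); last by move=> e; rewrite inE.
have E1 : forall S : {set 'I_m}, (#|S| <= L)%N ->
    (\sum_(e in [set e : {ffun 'I_m -> 'I_3} | (#|supp e| <= L)%N] | supp e == S) 1 = 2 ^ #|S|)%N.
  move=> S HS; rewrite -card_supp sum1_card; apply: eq_card => e; rewrite -topredE /= !inE.
  by case: (supp e =P S) => [->|]; rewrite ?HS ?andbF.
rewrite (eq_bigr _ E1) /=.
rewrite (partition_big (fun S : {set 'I_m} => (inord #|S| : 'I_L.+1)) xpredT) //=.
apply: eq_bigr => k _.
have E2 : forall S : {set 'I_m}, ((#|S| <= L)%N && (inord #|S| == k)) = (S \in [set S : {set 'I_m} | #|S| == k]).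
  move=> S; rewrite inE; apply/andP/eqP => [[HS /eqP <-]|HS].
    by rewrite inordK.
  split; first by rewrite HS -ltnS ltn_ord.
  by apply/eqP/val_inj; rewrite /= inordK HS // ltn_ord.
rewrite (eq_bigl _ _ E2).
rewrite (eq_bigr (fun _ => 2 ^ k)%N); last by move=> S; rewrite inE => /eqP ->.
by rewrite sum_nat_const card_draws card_ord mulnC.
Qed.
End Count.

Section Grid.
Variable R : realType.
Variable m : nat.

Lemma w_gt0 : 0 < (w : R).
Proof. rewrite /w; have := pi_gt0 R; lra. Qed.

Lemma Xv0 (y : 'I_3) : ((Xv y : R) == 0) = (y == ord0).
Proof.
have hw := w_gt0.
case: y => [[|[|[|k]]] Hk] //=; rewrite /Xv /=.
- by rewrite eqxx.
- by rewrite gt_eqF.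
- by rewrite oppr_eq0 gt_eqF.
Qed.

Lemma kk_Xv (y : 'I_3) : y != ord0 -> kk (Xv y : R) = 0.
Proof.
case: y => [[|[|[|k]]] Hk] //= _; rewrite /kk /Xv /= ?cosN /w cos_w; lra.
Qed.

Definition Xrow (e : {ffun 'I_m -> 'I_3}) : 'rV[R]_m := \row_j Xv (e j).

Lemma nnz_Xrow e : nnz (Xrow e) = #|supp e|.
Proof. rewrite /nnz /supp; apply: eq_card => j; by rewrite !inE mxE Xv0. Qed.

Definition dec (v : 'rV[R]_m) : {ffun 'I_m -> 'I_3} :=
  [ffun j => if v 0 j == 0 then ord0 else if v 0 j == w then (@Ordinal 3 1 isT) else (@Ordinal 3 2 isT)].

Lemma dec_grid (v : 'rV[R]_m) : (forall j, v 0 j = - (2 * pi / 3) \/ v 0 j = 0 \/ v 0 j = 2 * pi / 3) ->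
  Xrow (dec v) = v.
Proof.
have hw := @w_gt0; rewrite /w in hw.
move=> H; apply/rowP => j; rewrite !mxE ffunE.
case: (H j) => [->|[->|->]]; rewrite /Xv /w.
- have -> : (- (2 * pi / 3) == 0 :> R) = false by apply/negbTE; rewrite eqr_oppLR oppr0 gt_eqF.
  have -> : (- (2 * pi / 3) == 2 * pi / 3 :> R) = false by apply/negbTE; apply/eqP => E; move: hw; lra.
  by [].
- by rewrite eqxx.
- have -> : (2 * pi / 3 == 0 :> R) = false by apply/negbTE; rewrite gt_eqF.
  by rewrite eqxx.
Qed.

Lemma Xrow_grid e j : Xrow e 0 j = - (2 * pi / 3) \/ Xrow e 0 j = 0 \/ Xrow e 0 j = 2 * pi / 3.
Proof.
rewrite mxE /Xv /w; case: (e j) => [[|[|[|k]]] Hk] //=; by [right; left | right; right | left].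
Qed.

Lemma dec_Xrow e : dec (Xrow e) = e.
Proof.
apply/ffunP => j; rewrite ffunE !mxE.
have hw := @w_gt0.
case E: (e j) => [[|[|[|k]]] Hk] //=; rewrite /Xv /=.
- by rewrite eqxx; apply/val_inj.
- rewrite gt_eqF // eqxx; exact/val_inj.
- rewrite eqr_oppLR oppr0 gt_eqF //.
  have -> : (- w == w :> R) = false by apply/negbTE; apply/eqP => E'; move: hw; lra.
  exact/val_inj.
Qed.

End Grid.

Lemma kk_tri (R : realType) (x pj : R) :
  1 / 3 + 2 / 3 * cos (x + pj) * cos pj + 2 / 3 * sin (x + pj) * sin pj = kk x.
Proof.
rewrite /kk; have -> : cos x = cos (x + pj - pj) by rewrite addrK.
rewrite cosB; by field.
Qed.

Lemma K_Pf (R : realType) m (p th x : 'rV[R]_m) :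
  Ktilde x (th - p) =
  Pf (fun j => (1 / 3, 2 / 3 * cos (x 0 j + p 0 j), 2 / 3 * sin (x 0 j + p 0 j))) th.
Proof.
rewrite /Ktilde /Pf; apply: eq_bigr => j _; rewrite triE /= !mxE.
have -> : x 0 j - (th 0 j - p 0 j) = (x 0 j + p 0 j) - th 0 j by ring.
rewrite cosB; by field.
Qed.

Theorem theorem3 (R : realType) (n m : nat)
  (M : 'M[R[i]]_(2 ^ n)) (C : 'I_m.+1 -> 'M[R[i]]_(2 ^ n))
  (G : 'I_m -> 'M[R[i]]_(2 ^ n)) :
  hermitian_mx M ->
  (forall k, unitary_mx (C k)) ->
  (forall j, hermitian_mx (G j)) ->
  (forall j (a : R[i]), eigenvalue (G j) a <-> (a = 1 \/ a = -1)) ->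
  forall (p : 'rV[R]_m) (L : nat), (0 < L)%N -> (L <= m)%N ->
  forall (D : nat) (q : 'I_D -> 'rV[R]_m),
  injective q ->
  (forall j, grid_pt L (q j)) ->
  (forall v, grid_pt L v -> exists j, q j = v) ->
  let f := expval M C G in
  let ft := fun theta : 'rV[R]_m =>
              \sum_(j < D) f (p + q j) * Ktilde (q j) (theta - p) in
  [/\ D = (\sum_(k < L.+1) 2 ^ k * binomial m k)%N,
      (forall vt : 'rV[R]_m, (nnz vt <= L)%N -> ft (p + vt) = f (p + vt)) &
      (forall alpha : 'I_m -> nat, (\sum_(i < m) alpha i <= L)%N ->
         Dmulti alpha (f \- ft) p = 0)].
Proof.
move=> _ _ _ _ p L L0 Lm D q qinj qgrid qsurj f ft.
pose good := fun e : {ffun 'I_m -> 'I_3} => (#|supp e| <= L)%N.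
have hq j : Xrow R (dec (q j)) = q j by apply: dec_grid; case: (qgrid j).
pose h := fun j => dec (q j).
have hinj : injective h.
  by move=> j k E; apply: qinj; rewrite -hq -(hq k); congr (Xrow R _).
have himg : h @: [set: 'I_D] = [set e | good e].
  apply/finset.setP => e; rewrite inE; apply/imsetP/idP.
    move=> [j _ ->]; rewrite /good -(nnz_Xrow R) /h hq; by case: (qgrid j).
  move=> ge; have [j qj] : exists j, q j = Xrow R e.
    apply: qsurj; split; first exact: Xrow_grid.
    by rewrite nnz_Xrow.
  by exists j => //; rewrite /h /= qj dec_Xrow.
have sum_q : forall F : 'rV[R]_m -> R, \sum_(j < D) F (q j) = \sum_(e | good e) F (Xrow R e).
  move=> F.
  transitivity (\sum_(e in h @: [set: 'I_D]) F (Xrow R e)); last first.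
    by rewrite himg; apply: eq_bigl => e; rewrite inE.
  rewrite big_imset /=; last by move=> ? ? _ _; apply: hinj.
  by apply: eq_big => [j|j _]; rewrite ?inE // /h hq.
have full : forall th, f th = \sum_e f (p + Xrow R e) * Ktilde (Xrow R e) (th - p).
  move=> th.
  have := interp_set p (f_deg1 C G M) (enum 'I_m) th.
  have -> : [set x in enum 'I_m] = [set: 'I_m] by apply/finset.setP => x; rewrite !inE mem_enum.
  move=> E; rewrite {1}/f E; apply: eq_big => [e|e _].
    by apply/forallP => j; rewrite inE.
  have E1 : mix p th [set: 'I_m] e = p + Xrow R e by apply/rowP => j; rewrite !mxE inE.
  have E2 : W p th [set: 'I_m] e = Ktilde (Xrow R e) (th - p).
    rewrite /W /Ktilde; apply: eq_big => [j|j _]; [by rewrite inE | by rewrite /kk !mxE].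
  Timeout 20 rewrite E1 E2.
  by [].
have splitE : forall th, f th - ft th =
    \sum_(e | ~~ good e) f (p + Xrow R e) * Ktilde (Xrow R e) (th - p).
  move=> th; rewrite {1}full (bigID good) /=.
  rewrite /ft (sum_q (fun v => f (p + v) * Ktilde v (th - p))) /=.
  by rewrite addrC addrK.
split.
- rewrite -count_good -(card_ord D) -himg card_imset //.
  by rewrite cardsT card_ord.
- move=> vt Hvt.
  symmetry; apply: subr0_eq; rewrite splitE.
  apply: big1 => e bad.
  have -> : p + vt - p = vt by rewrite (addrC p vt) addrK.
  have : ~~ (supp e \subset [set j | vt 0 j != 0]).
    apply/negP => /subset_leq_card H2.
    by move: bad; rewrite /good (leq_trans H2 Hvt).
  case/fintype.subsetPn => j je jv.
  rewrite /Ktilde (bigD1 j) //= !mxE.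
  move: jv; rewrite inE negbK => /eqP ->; rewrite subr0.
  move: je; rewrite inE => je.
  have -> : (1 + 2 * cos (Xv (e j))) / 3 = kk (Xv (e j) : R) by [].
  by rewrite kk_Xv // mul0r mulr0.
- move=> alpha Ha.
  pose Tk := fun e : {ffun 'I_m -> 'I_3} => (fun j => (1 / 3, 2 / 3 * cos (Xrow R e 0 j + p 0 j), 2 / 3 * sin (Xrow R e 0 j + p 0 j))) : 'I_m -> R * R * R.
  have -> : f \- ft = sumfun (fun e => ~~ good e) (fun e => f (p + Xrow R e)) Tk.
    apply/funext => th.
    transitivity (f th - ft th); first by [].
    rewrite splitE; apply: eq_bigr => e _; by rewrite K_Pf.
  rewrite Dmulti_sumfun /sumfun; apply: big1 => e bad.
  have : ~~ (supp e \subset [set j | alpha j != 0%N]).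
    apply/negP => /subset_leq_card H2; move: bad; rewrite /good.
    have Hc : (#|[set j | alpha j != 0%N]| <= \sum_(i < m) alpha i)%N.
      rewrite -sum1_card.
      rewrite [X in (_ <= X)%N](bigID (fun j => j \in [set j | alpha j != 0%N])) /=.
      apply: leq_trans (leq_addr _ _); apply: leq_sum => j; by rewrite inE lt0n.
    by rewrite (leq_trans H2 (leq_trans Hc Ha)).
  case/fintype.subsetPn => j je jv.
  rewrite /Pf (bigD1 j) //= DT_keep; last by move: jv; rewrite inE negbK => /eqP.
  move: je; rewrite inE => je.
  by rewrite /Tk triE /= mxE kk_tri kk_Xv // mul0r mulr0.
Qed.
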